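(* Let $T$ be a set of three affinely independent points in $\mathbb{N}_0^2$. Then for every $\alpha\in T$ there exists a point $\beta\in E_1^\infty(T)\setminus\{\alpha\}$ such that $\beta-\alpha\in\mathbb{N}^2$ (both entries strictly positive).
   Context: $\mathbb{N}=\{1,2,\dots\}$, $\mathbb{N}_0=\{0,1,2,\dots\}$. For nonempty $\Gamma\subseteq\mathbb{N}_0^d$, $\Lambda(\Gamma)$ is the coset in $\mathbb{Z}^d$ generated by $\Gamma$ (smallest coset of a subgroup of $\mathbb{Z}^d$ containing $\Gamma$); each $\lambda\in\Lambda(\Gamma)$ can be written $\lambda=\gamma+\sum_{\alpha\in\Gamma,\alpha\neq\gamma}m_{\gamma,\alpha}(\alpha-\gamma)$ with $\gamma\in\Gamma$ and integers $m_{\gamma,\alpha}$, finitely many nonzero. $d(\Gamma,\lambda)$ is the infimum over all such representations of $\max\big(\sum_{m_{\gamma,\alpha}>0}m_{\gamma,\alpha},-\sum_{m_{\gamma,\alpha}<0}m_{\gamma,\alpha}\big)$, and $E_n(\Gamma)=\{\lambda\in\Lambda(\Gamma)\cap\mathbb{N}_0^d:d(\Gamma,\lambda)\leq n\}$. Set $E_n^1(T)=E_n(T)$, $E_n^{k+1}(T)=E_n(E_n^k(T))$, and $E_n^\infty(T)=\bigcup_{k\geq1}E_n^k(T)$. *)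

(* Defs.v *)
From HB Require Import structures.
From mathcomp Require Import all_boot all_order all_algebra.
Set Implicit Arguments. Unset Strict Implicit. Unset Printing Implicit Defensive.
Import Order.TTheory GRing.Theory Num.Theory.
Local Open Scope ring_scope.

Definition pt (d : nat) := 'rV[int]_d.
Definition ptset (d : nat) := pt d -> Prop.

Definition in_N0 d (v : pt d) : Prop := forall i : 'I_d, 0 <= v ord0 i.
Definition in_N d (v : pt d) : Prop := forall i : 'I_d, 0 < v ord0 i.

Definition is_subgroup d (H : ptset d) : Prop :=
  H 0 /\ forall x y, H x -> H y -> H (x - y).
Definition is_coset d (C : ptset d) : Prop :=
  exists (c : pt d) (H : ptset d), is_subgroup H /\ forall x, C x <-> H (x - c).

Definition Lambda d (G : ptset d) : ptset d :=
  fun l => forall C : ptset d, is_coset C -> (forall x, G x -> C x) -> C l.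

(* A representation l = g + sum_{alpha in G, alpha <> g} m_alpha (alpha - g),
   finitely supported coefficients given as a list of (alpha, m_alpha)
   with distinct alphas. *)
Definition is_rep d (G : ptset d) (l : pt d) (g : pt d) (s : seq (pt d * int)) : Prop :=
  G g /\ uniq (map fst s) /\ (forall p, p \in s -> G p.1 /\ p.1 <> g) /\
  l = g + \sum_(p <- s) (p.1 - g) *~ p.2.

Definition cost_pos d (s : seq (pt d * int)) : int := \sum_(p <- s) Num.max 0 p.2.
Definition cost_neg d (s : seq (pt d * int)) : int := \sum_(p <- s) Num.max 0 (- p.2).

(* d(Gamma, l) <= n : the infimum (over naturals, hence attained) is <= n *)
Definition dist_le d (G : ptset d) (l : pt d) (n : nat) : Prop :=
  exists g s, is_rep G l g s /\ cost_pos s <= n%:Z /\ cost_neg s <= n%:Z.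

Definition E d (n : nat) (G : ptset d) : ptset d :=
  fun l => Lambda G l /\ in_N0 l /\ dist_le G l n.

Definition Eiter d (n k : nat) (T : ptset d) : ptset d := iter k (E n) T.
Definition Einf d (n : nat) (T : ptset d) : ptset d :=
  fun l => exists k, (1 <= k)%N /\ Eiter n k T l.

(* affine independence of three points: the only integer (equivalently
   rational) affine relation is trivial *)
Definition aff_indep3 d (a b c : pt d) : Prop :=
  forall l1 l2 l3 : int, l1 + l2 + l3 = 0 ->
    a *~ l1 + b *~ l2 + c *~ l3 = 0 -> l1 = 0 /\ l2 = 0 /\ l3 = 0.

(* Main.v *)
Require Import Defs.
From mathcomp Require Import all_boot all_order all_algebra.
From mathcomp Require Import zify.
Import Order.TTheory GRing.Theory Num.Theory.
Set Implicit Arguments. Unset Strict Implicit.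
Local Open Scope ring_scope.

Definition goodR (a1 a2 : int) (R : int -> int -> Prop) : Prop :=
  [/\ R 0 0, (forall x y, R x y -> 0 <= a1 + x /\ 0 <= a2 + y) &
   (forall x1 y1 x2 y2 x3 y3, R x1 y1 -> R x2 y2 -> R x3 y3 ->
      0 <= a1 + (x1 + x2 - x3) -> 0 <= a2 + (y1 + y2 - y3) ->
      R (x1 + x2 - x3) (y1 + y2 - y3))].

Lemma clR a1 a2 R (G : goodR a1 a2 R) x1 y1 x2 y2 x3 y3 X Y :
  R x1 y1 -> R x2 y2 -> R x3 y3 -> X = x1 + x2 - x3 -> Y = y1 + y2 - y3 ->
  0 <= a1 + X -> 0 <= a2 + Y -> R X Y.
Proof. case: G => _ _ H ? ? ? -> ->; exact: H. Qed.

Lemma nnR a1 a2 R (G : goodR a1 a2 R) x y : R x y -> 0 <= a1 + x /\ 0 <= a2 + y.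
Proof. case: G => _ H _; exact: H. Qed.

Lemma R00 a1 a2 R (G : goodR a1 a2 R) : R 0 0.
Proof. by case: G. Qed.

Definition goal (R : int -> int -> Prop) := exists w1 w2, R w1 w2 /\ 0 < w1 /\ 0 < w2.

Lemma Rmul a1 a2 R (G : goodR a1 a2 R) w1 w2 : 0 <= w1 -> 0 <= w2 -> R w1 w2 ->
  forall n : nat, R (n%:Z * w1) (n%:Z * w2).
Proof.
move=> h1 h2 Rw; have [A1 A2] := nnR G (R00 G).
elim=> [|n IH]; first by rewrite !mul0r; exact: (R00 G).
apply: (clR G IH Rw (R00 G)); try lia.
Qed.

Lemma easy a1 a2 R (G : goodR a1 a2 R) w1 w2 v1 v2 :
  0 <= a1 -> 0 <= a2 ->
  0 <= w1 -> 0 <= w2 -> R w1 w2 -> R v1 v2 -> w1 * v2 - w2 * v1 != 0 -> goal R.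
Proof.
move=> a1p a2p h1 h2 Rw Rv det.
have [V1 V2] := nnR G Rv.
have Rk := Rmul G h1 h2 Rw.
have R0 := R00 G.
have [p1|z1] : 0 < w1 \/ w1 = 0 by lia.
  have [p2|z2] : 0 < w2 \/ w2 = 0 by lia.
    by exists w1, w2.
  subst w2. have Hv2 : v2 <> 0 by move=> E; move: det; rewrite E; lia.
  have [q|q] : 0 < v2 \/ v2 < 0 by lia.
    exists ((`|v1|%N.+1)%:Z * w1 + v1 - 0), (v2).
    split; last by nia.
    apply: (clR G (Rk (`|v1|%N.+1)) Rv R0); try nia.
  exists ((`|v1|%N.+1)%:Z * w1 + 0 - v1), (- v2).
  split; last by nia.
  apply: (clR G (Rk (`|v1|%N.+1)) R0 Rv); try nia.
subst w1.
have [p2|z2] : 0 < w2 \/ w2 = 0 by lia.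
  2: by move: det; rewrite z2; lia.
have Hv1 : v1 <> 0 by move=> E; move: det; rewrite E; lia.
have [q|q] : 0 < v1 \/ v1 < 0 by lia.
  exists v1, ((`|v2|%N.+1)%:Z * w2 + v2 - 0).
  split; last by nia.
  apply: (clR G (Rk (`|v2|%N.+1)) Rv R0); try nia.
exists (- v1), ((`|v2|%N.+1)%:Z * w2 + 0 - v2).
split; last by nia.
apply: (clR G (Rk (`|v2|%N.+1)) R0 Rv); try nia.
Qed.

Lemma easy2 a1 a2 R (G : goodR a1 a2 R) w1 w2 v1 v2 :
  0 <= a1 -> 0 <= a2 ->
  (0 <= w1 /\ 0 <= w2) \/ (w1 <= 0 /\ w2 <= 0) ->
  R w1 w2 -> R v1 v2 -> w1 * v2 - w2 * v1 != 0 -> goal R.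
Proof.
move=> a1p a2p [[h1 h2]|[h1 h2]] Rw Rv det; first exact: (easy G a1p a2p h1 h2 Rw Rv det).
have [W1 W2] := nnR G Rw.
have R0 := R00 G.
have Rm : R (0 + 0 - w1) (0 + 0 - w2) by apply: (clR G R0 R0 Rw); lia.
apply: (easy G a1p a2p _ _ Rm Rv); lia.
Qed.

Local Ltac fin G a1p a2p IH Ru Rv Rs :=
  match type of Rs with
  | ?R ?X ?Y =>
    let hs := fresh "hs" in
    assert (hs : ((0 <= X /\ 0 <= Y) \/ (X <= 0 /\ Y <= 0)) \/
                   ((0 < X /\ Y < 0) \/ (X < 0 /\ 0 < Y))) by lia;
    destruct hs as [hs|[hs|hs]];
    [ first [ apply: (easy2 G a1p a2p hs Rs Ru); lia
            | apply: (easy2 G a1p a2p hs Rs Rv); lia ]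
    | first [ apply: (IH _ _ _ _ _ Ru Rs); lia
            | apply: (IH _ _ _ _ _ Rs Rv); lia ]
    | first [ apply: (IH _ _ _ _ _ Ru Rs); lia
            | apply: (IH _ _ _ _ _ Rs Rv); lia ] ]
  end.

Lemma mainA a1 a2 R (G : goodR a1 a2 R) : 0 <= a1 -> 0 <= a2 ->
  forall n u1 u2 v1 v2, (absz u1 + absz u2 + absz v1 + absz v2 <= n)%N ->
  R u1 u2 -> R v1 v2 -> u1 * v2 - u2 * v1 != 0 -> goal R.
Proof.
move=> a1p a2p; elim=> [|n IH] u1 u2 v1 v2 hn Ru Rv det.
  have E1 : u1 = 0 by lia.
  have E2 : u2 = 0 by lia.
  by move: det; rewrite E1 E2 !mul0r subrr eqxx.
have [U1 U2] := nnR G Ru; have [V1 V2] := nnR G Rv.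
have R0 := R00 G.
have [hu|hu] : ((0 <= u1 /\ 0 <= u2) \/ (u1 <= 0 /\ u2 <= 0)) \/
    ((0 < u1 /\ u2 < 0) \/ (u1 < 0 /\ 0 < u2)) by lia.
  by apply: (easy2 G a1p a2p hu Ru Rv det).
have [hv|hv] : ((0 <= v1 /\ 0 <= v2) \/ (v1 <= 0 /\ v2 <= 0)) \/
    ((0 < v1 /\ v2 < 0) \/ (v1 < 0 /\ 0 < v2)) by lia.
  apply: (easy2 G a1p a2p hv Rv Ru); lia.
have [[hu1 hu2]|[hu1 hu2]] := hu; have [[hv1 hv2]|[hv1 hv2]] := hv.
- have [le|lt] : u1 <= v1 \/ v1 < u1 by lia.
    have Rs : R (v1 + 0 - u1) (v2 + 0 - u2) by apply: (clR G Rv R0 Ru); lia.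
    fin G a1p a2p IH Ru Rv Rs.
  have Rs : R (u1 + 0 - v1) (u2 + 0 - v2) by apply: (clR G Ru R0 Rv); lia.
  fin G a1p a2p IH Ru Rv Rs.
- have Rs : R (u1 + v1 - 0) (u2 + v2 - 0) by apply: (clR G Ru Rv R0); lia.
  fin G a1p a2p IH Ru Rv Rs.
- have Rs : R (u1 + v1 - 0) (u2 + v2 - 0) by apply: (clR G Ru Rv R0); lia.
  fin G a1p a2p IH Ru Rv Rs.
- have [le|lt] : u2 <= v2 \/ v2 < u2 by lia.
    have Rs : R (v1 + 0 - u1) (v2 + 0 - u2) by apply: (clR G Rv R0 Ru); lia.
    fin G a1p a2p IH Ru Rv Rs.
  have Rs : R (u1 + 0 - v1) (u2 + 0 - v2) by apply: (clR G Ru R0 Rv); lia.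
  fin G a1p a2p IH Ru Rv Rs.
Qed.

Ltac glia := repeat match goal with |- context [@fun_of_matrix _ _ _ ?A ?i ?j] =>
  let t := fresh "t" in move: (A i j) => t end; lia.

Lemma entz (a : pt 2) (l : int) i j : (a *~ l) i j = a i j * l.
Proof. by rewrite -scaler_int mxE intz mulrC. Qed.

Lemma two (P : 'I_2 -> Prop) : P ord0 -> P ord_max -> forall i, P i.
Proof.
move=> h0 h1 [[|[|m]] H].
- by have -> : Ordinal H = ord0 by apply: val_inj.
- by have -> : Ordinal H = ord_max by apply: val_inj.
- by [].
Qed.

Lemma Eiter_N0 d n (T : ptset d) : (forall x, T x -> in_N0 x) ->
  forall k x, Eiter n k T x -> in_N0 x.
Proof. move=> HT [|k] x; first exact: HT. by case=> _ []. Qed.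

Lemma E_incl d n (G : ptset d) x : (forall y, G y -> in_N0 y) -> G x -> E n G x.
Proof.
move=> HG Gx; split; first by move=> C _ HC; exact: HC.
split; first exact: HG.
exists x, [::]; split; last by rewrite /cost_pos /cost_neg !big_nil; split.
split=> //; split=> //; split=> //; by rewrite big_nil addr0.
Qed.

Lemma Eiter_mono d n (T : ptset d) : (forall x, T x -> in_N0 x) ->
  forall i j x, (i <= j)%N -> Eiter n i T x -> Eiter n j T x.
Proof.
move=> HT i j x /subnK <-; elim: (j - i)%N => [|k IH] H; first by [].
change (E n (Eiter n (k + i) T) x); apply: E_incl; last exact: IH.
exact: (Eiter_N0 HT).
Qed.

Lemma Lambda_comb d (G : ptset d) x y z : G x -> G y -> G z -> Lambda G (x + y - z).
Proof.
move=> Gx Gy Gz C [c [H [[H0 Hs] HC]]] GC.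
have hx := (proj1 (HC x) (GC x Gx)).
have hy := (proj1 (HC y) (GC y Gy)).
have hz := (proj1 (HC z) (GC z Gz)).
apply/HC.
have -> : x + y - z - c = (x - c) - ((z - c) - (y - c)).
  apply/rowP => j; rewrite !mxE; move: (x 0 j) (y 0 j) (z 0 j) (c 0 j) => X Y Z W; lia.
by apply: (Hs _ _ hx (Hs _ _ hz hy)).
Qed.

Lemma E_comb (G : ptset 2) x y z : G x -> G y -> G z -> in_N0 (x + y - z) ->
  E 1 G (x + y - z).
Proof.
move=> Gx Gy Gz N0; split; first exact: Lambda_comb.
split=> //.
have [exz|nxz] := eqVneq x z.
  subst z; exists y, [::]; split; last by rewrite /cost_pos /cost_neg !big_nil; split.
  split=> //; split=> //; split=> //.
  by rewrite big_nil addr0 addrC addKr.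
have [eyz|nyz] := eqVneq y z.
  subst z; exists x, [::]; split; last by rewrite /cost_pos /cost_neg !big_nil; split.
  split=> //; split=> //; split=> //.
  by rewrite big_nil addr0 addrK.
have [exy|nxy] := eqVneq x y.
  subst y; exists x, [:: (z, -1)]; split; last by rewrite /cost_pos /cost_neg !big_cons !big_nil; split.
  split=> //; split=> //; split.
    move=> p; rewrite inE => /eqP -> /=; split=> //; apply/eqP; by rewrite eq_sym.
  rewrite big_cons big_nil /=; apply/rowP => j; rewrite !mxE; move: (x 0 j) (z 0 j) => X Z; lia.
exists x, [:: (y, 1); (z, -1)]; split; last by rewrite /cost_pos /cost_neg !big_cons !big_nil; split.
split=> //; split; first by rewrite /= inE nyz.
split.
  move=> p; rewrite !inE => /orP [] /eqP -> /=; (split=> //; apply/eqP; by rewrite eq_sym).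
rewrite !big_cons big_nil /=; apply/rowP => j; rewrite !mxE; glia.
Qed.

Lemma Einf_comb (T : ptset 2) : (forall x, T x -> in_N0 x) ->
  forall x y z, Einf 1 T x -> Einf 1 T y -> Einf 1 T z -> in_N0 (x + y - z) ->
  Einf 1 T (x + y - z).
Proof.
move=> HT x y z [i [_ Hi]] [j [_ Hj]] [k [_ Hk]] N0.
exists (maxn i (maxn j k)).+1; split=> //.
set K := maxn i (maxn j k).
change (E 1 (Eiter 1 K T) (x + y - z)); apply: E_comb => //.
- apply: (@Eiter_mono _ 1 _ HT i K x _ Hi); lia.
- apply: (@Eiter_mono _ 1 _ HT j K y _ Hj); lia.
- apply: (@Eiter_mono _ 1 _ HT k K z _ Hk); lia.
Qed.

Definition Rof (S : ptset 2) (a : pt 2) (x y : int) : Prop :=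
  exists b, S b /\ b ord0 ord0 = a ord0 ord0 + x /\ b ord0 ord_max = a ord0 ord_max + y.

Lemma good_Rof (T : ptset 2) a : (forall x, T x -> in_N0 x) -> T a ->
  goodR (a ord0 ord0) (a ord0 ord_max) (Rof (Einf 1 T) a).
Proof.
move=> HT Ta; split.
- exists a; split; last by rewrite !addr0.
  exists 1%N; split=> //; apply: E_incl => //.
- move=> x y [b [[k [_ Hb]] [e1 e2]]].
  have := Eiter_N0 HT Hb => N; rewrite -e1 -e2; split; exact: N.
- move=> x1 y1 x2 y2 x3 y3 [b1 [S1 [e11 e12]]] [b2 [S2 [e21 e22]]] [b3 [S3 [e31 e32]]] n1 n2.
  exists (b1 + b2 - b3); split; last by rewrite !mxE e11 e12 e21 e22 e31 e32; split; lia.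
  apply: Einf_comb => //.
  apply: two; rewrite !mxE ?e11 ?e12 ?e21 ?e22 ?e31 ?e32; lia.
Qed.

Lemma at_alpha (T : ptset 2) (al p q : pt 2) : (forall x, T x -> in_N0 x) ->
  T al -> T p -> T q ->
  (p ord0 ord0 - al ord0 ord0) * (q ord0 ord_max - al ord0 ord_max) -
  (p ord0 ord_max - al ord0 ord_max) * (q ord0 ord0 - al ord0 ord0) != 0 ->
  exists beta : pt 2, Einf 1 T beta /\ beta <> al /\ in_N (beta - al).
Proof.
move=> HT Ta Tp Tq det.
have G := good_Rof HT Ta.
have N := HT _ Ta.
have Sp : Einf 1 T p by exists 1%N; split => //; apply: E_incl.
have Sq : Einf 1 T q by exists 1%N; split => //; apply: E_incl.
have Rp : Rof (Einf 1 T) al (p ord0 ord0 - al ord0 ord0) (p ord0 ord_max - al ord0 ord_max).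
  by exists p; split => //; split; rewrite addrC subrK.
have Rq : Rof (Einf 1 T) al (q ord0 ord0 - al ord0 ord0) (q ord0 ord_max - al ord0 ord_max).
  by exists q; split => //; split; rewrite addrC subrK.
have [w1 [w2 [[b [Sb [e1 e2]]] [p1 p2]]]] :=
  mainA G (N ord0) (N ord_max) (leqnn _) Rp Rq det.
exists b; split=> //; split.
  by move=> E; move: e1; rewrite E; lia.
by apply: two; rewrite !mxE ?e1 ?e2; glia.
Qed.

Theorem lemma3p6 (a b c : pt 2) :
  in_N0 a -> in_N0 b -> in_N0 c -> aff_indep3 a b c ->
  let T : ptset 2 := fun x => x = a \/ x = b \/ x = c in
  forall alpha : pt 2, T alpha ->
    exists beta : pt 2, Einf 1 T beta /\ beta <> alpha /\ in_N (beta - alpha).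
Proof.
move=> Na Nb Nc ind T alpha Talpha.
have HT : forall x, T x -> in_N0 x by move=> x [->|[->|->]].
have Ta : T a by left.
have Tb : T b by right; left.
have Tc : T c by right; right.
set a0 := a ord0 ord0; set a1 := a ord0 ord_max.
set b0 := b ord0 ord0; set b1 := b ord0 ord_max.
set c0 := c ord0 ord0; set c1 := c ord0 ord_max.
have rel : forall x y : int, (b0 - a0) * x + (c0 - a0) * y = 0 ->
    (b1 - a1) * x + (c1 - a1) * y = 0 -> x = 0 /\ y = 0.
  move=> x y h0 h1.
  have hv : a *~ (- x - y) + b *~ x + c *~ y = 0.
    apply/rowP; apply: two; rewrite !mxE !entz.
      by change (a0 * (- x - y) + b0 * x + c0 * y = 0); lia.
    by change (a1 * (- x - y) + b1 * x + c1 * y = 0); lia.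
  have [_ [h2 h3]] := ind (- x - y) x y ltac:(lia) hv.
  by [].
have D : (b0 - a0) * (c1 - a1) - (b1 - a1) * (c0 - a0) != 0.
  apply/negP => /eqP D.
  have [h1 h2] := rel (c1 - a1) (- (b1 - a1)) ltac:(lia) ltac:(lia).
  have [h3 h4] := rel (c0 - a0) (- (b0 - a0)) ltac:(lia) ltac:(lia).
  have [h5 h6] := rel 1 0 ltac:(lia) ltac:(lia).
  lia.
case: Talpha => [->|[->|->]].
- by apply: (at_alpha HT Ta Tb Tc).
- apply: (at_alpha HT Tb Ta Tc); rewrite -/a0 -/a1 -/b0 -/b1 -/c0 -/c1; lia.
- apply: (at_alpha HT Tc Ta Tb); rewrite -/a0 -/a1 -/b0 -/b1 -/c0 -/c1; lia.
Qed.
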